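(* Let $\tau\in\mathbb{R}$ be such that $\mathbf B(\tau,0)=I$. Then \[ \frac{\partial\,\mathrm{tr}\,\mathbf B}{\partial\sigma}(\tau,0)=0\qquad\text{and}\qquad\frac{\partial^2\mathrm{tr}\,\mathbf B}{\partial\sigma^2}(\tau,0)\neq 0 . \]
   Context: Fix $a>0$, $b\in\mathbb{R}\setminus\{0\}$, $\nu\in[0,1)$, an integer $k\ge 2$ and $c\in C^k(\mathbb{S}^1,\mathbb{C})$ ($2\pi$-periodic). For $\epsilon\in\mathbb{R}$ let $\lambda_\epsilon=a+ib\epsilon$. For $\sigma\in\mathbb{C}$, $\epsilon\in\mathbb{R}$ consider the system $\dot V=\mathbf M(t,\sigma,\epsilon)V$ with \[ \mathbf M(t,\sigma,\epsilon)=\begin{pmatrix} i\frac{\sigma-\lambda_\epsilon\nu}{\lambda_\epsilon} & \frac{c(t)}{\lambda_\epsilon}\\ \frac{\overline{c(t)}}{\overline{\lambda_\epsilon}} & -i\frac{\sigma-\overline{\lambda_\epsilon}\nu}{\overline{\lambda_\epsilon}}\end{pmatrix}, \] let $\mathbf V(t,\sigma,\epsilon)$ be its fundamental matrix with $\mathbf V(0,\sigma,\epsilon)=I$, and let $\mathbf B(\sigma,\epsilon)=\mathbf V(2\pi,\sigma,\epsilon)$ be the monodromy matrix (entire in $\sigma$). *)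

(* Defs.v *)
From Stdlib Require Import Reals.
Open Scope R_scope.

Definition Cx := (R * R)%type.
Definition Cre (z : Cx) : R := fst z.
Definition Cim (z : Cx) : R := snd z.
Definition RtoC (x : R) : Cx := (x, 0).
Definition C0 : Cx := (0, 0).
Definition C1 : Cx := (1, 0).
Definition Ci : Cx := (0, 1).
Definition Cadd (z w : Cx) : Cx := (fst z + fst w, snd z + snd w).
Definition Copp (z : Cx) : Cx := (- fst z, - snd z).
Definition Csub (z w : Cx) : Cx := Cadd z (Copp w).
Definition Cmul (z w : Cx) : Cx :=
  (fst z * fst w - snd z * snd w, fst z * snd w + snd z * fst w).
Definition Cconj (z : Cx) : Cx := (fst z, - snd z).
Definition Cinv (z : Cx) : Cx :=
  (fst z / (fst z ^ 2 + snd z ^ 2), - snd z / (fst z ^ 2 + snd z ^ 2)).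
Definition Cdiv (z w : Cx) : Cx := Cmul z (Cinv w).
Definition Cnorm (z : Cx) : R := sqrt (fst z ^ 2 + snd z ^ 2).

Record M2 := mkM2 { m11 : Cx; m12 : Cx; m21 : Cx; m22 : Cx }.
Definition M2id : M2 := mkM2 C1 C0 C0 C1.
Definition M2mul (A B : M2) : M2 :=
  mkM2 (Cadd (Cmul (m11 A) (m11 B)) (Cmul (m12 A) (m21 B)))
       (Cadd (Cmul (m11 A) (m12 B)) (Cmul (m12 A) (m22 B)))
       (Cadd (Cmul (m21 A) (m11 B)) (Cmul (m22 A) (m21 B)))
       (Cadd (Cmul (m21 A) (m12 B)) (Cmul (m22 A) (m22 B))).
Definition M2tr (A : M2) : Cx := Cadd (m11 A) (m22 A).

Definition has_tderiv (g : R -> Cx) (t : R) (L : Cx) : Prop :=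
  derivable_pt_lim (fun s => fst (g s)) t (fst L) /\
  derivable_pt_lim (fun s => snd (g s)) t (snd L).

Definition has_tderiv_M2 (G : R -> M2) (t : R) (L : M2) : Prop :=
  has_tderiv (fun s => m11 (G s)) t (m11 L) /\
  has_tderiv (fun s => m12 (G s)) t (m12 L) /\
  has_tderiv (fun s => m21 (G s)) t (m21 L) /\
  has_tderiv (fun s => m22 (G s)) t (m22 L).

Definition has_cderiv (f : Cx -> Cx) (z : Cx) (L : Cx) : Prop :=
  forall eps : R, 0 < eps -> exists delta : R, 0 < delta /\
    forall h : Cx, h <> C0 -> Cnorm h < delta ->
      Cnorm (Csub (Cdiv (Csub (f (Cadd z h)) (f z)) h) L) < eps.

Definition CkR (k : nat) (f : R -> R) : Prop :=
  exists D : nat -> R -> R,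
    D 0%nat = f /\
    (forall j : nat, (j < k)%nat -> forall x, derivable_pt_lim (D j) x (D (S j) x)) /\
    continuity (D k).

(* complex-valued Cx^k function on S^1, i.e. 2pi-periodic Cx^k on R *)
Definition CkS1 (k : nat) (c : R -> Cx) : Prop :=
  (forall t, c (t + 2 * PI) = c t) /\
  CkR k (fun t => fst (c t)) /\ CkR k (fun t => snd (c t)).

Definition lam (a b eps : R) : Cx := (a, b * eps).

Definition Msys (a b nu : R) (c : R -> Cx) (t : R) (sigma : Cx) (eps : R) : M2 :=
  let l := lam a b eps in
  mkM2 (Cmul Ci (Cdiv (Csub sigma (Cmul l (RtoC nu))) l))
       (Cdiv (c t) l)
       (Cdiv (Cconj (c t)) (Cconj l))
       (Copp (Cmul Ci (Cdiv (Csub sigma (Cmul (Cconj l) (RtoC nu))) (Cconj l)))).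

Definition is_fundamental (a b nu : R) (c : R -> Cx) (V : R -> Cx -> R -> M2) : Prop :=
  forall (sigma : Cx) (eps : R),
    V 0 sigma eps = M2id /\
    forall t : R,
      has_tderiv_M2 (fun s => V s sigma eps) t
                    (M2mul (Msys a b nu c t sigma eps) (V t sigma eps)).

Definition monodromy (V : R -> Cx -> R -> M2) (sigma : Cx) (eps : R) : M2 :=
  V (2 * PI) sigma eps.

(* Main.v *)
Require Import Defs.
From Stdlib Require Import Reals.
Open Scope R_scope.
From Stdlib Require Import Lra Lia Psatz ClassicalEpsilon.


Ltac cx := unfold Cdiv, Csub, Cadd, Copp, Cmul, Cconj, Cinv, RtoC, Defs.C0, Defs.C1, Ci, Cre, Cim.
Ltac cxa := unfold Cdiv, Csub, Cadd, Copp, Cmul, Cconj, Cinv, RtoC, Defs.C0, Defs.C1, Ci, Cre, Cim in *.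

Lemma Cext (z w : Cx) : fst z = fst w -> snd z = snd w -> z = w.
Proof. destruct z, w; simpl; intros; subst; reflexivity. Qed.

Lemma Mext (A B : M2) : m11 A = m11 B -> m12 A = m12 B -> m21 A = m21 B -> m22 A = m22 B -> A = B.
Proof. destruct A, B; simpl; intros; subst; reflexivity. Qed.

Definition Madd (A B : M2) : M2 := mkM2 (Cadd (m11 A) (m11 B)) (Cadd (m12 A) (m12 B)) (Cadd (m21 A) (m21 B)) (Cadd (m22 A) (m22 B)).
Definition Msub (A B : M2) : M2 := mkM2 (Csub (m11 A) (m11 B)) (Csub (m12 A) (m12 B)) (Csub (m21 A) (m21 B)) (Csub (m22 A) (m22 B)).
Definition Mscal (z : Cx) (A : M2) : M2 := mkM2 (Cmul z (m11 A)) (Cmul z (m12 A)) (Cmul z (m21 A)) (Cmul z (m22 A)).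
Definition adj (A : M2) : M2 := mkM2 (m22 A) (Copp (m12 A)) (Copp (m21 A)) (m11 A).
Definition det (A : M2) : Cx := Csub (Cmul (m11 A) (m22 A)) (Cmul (m12 A) (m21 A)).
Definition M0 : M2 := mkM2 Defs.C0 Defs.C0 Defs.C0 Defs.C0.

Ltac msplit := split; [|split;[|split]].
Ltac mx := unfold Madd, Msub, Mscal, adj, det, M0, M2id, M2mul, M2tr.
Ltac mxa := unfold Madd, Msub, Mscal, adj, det, M0, M2id, M2mul, M2tr in *.
Ltac mring := apply Mext; cbn [m11 m12 m21 m22]; apply Cext; cx; cbn [fst snd]; ring.
Ltac cring := apply Cext; cbn [m11 m12 m21 m22]; cx; cbn [fst snd]; ring.

Lemma test (A B C : M2) : M2mul (M2mul A B) C = M2mul A (M2mul B C).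
Proof. mx; mring. Qed.

Lemma dpl_ext (f g : R -> R) t l l' : (forall s, f s = g s) ->
  derivable_pt_lim f t l -> l = l' -> derivable_pt_lim g t l'.
Proof. intros H1 H H2; subst. unfold derivable_pt_lim in *. intros e he.
  destruct (H e he) as [d Hd]. exists d. intros. rewrite <- !H1. auto. Qed.

Ltac dext f tac := eapply (dpl_ext f); [intro; reflexivity | ..];
  (lazymatch goal with |- derivable_pt_lim _ _ _ => tac | |- _ => idtac end);
  try (simpl; ring).

Lemma hd_congr f t L L' : has_tderiv f t L -> L = L' -> has_tderiv f t L'.
Proof. intros; subst; auto. Qed.
Lemma hdM_congr f t L L' : has_tderiv_M2 f t L -> L = L' -> has_tderiv_M2 f t L'.
Proof. intros; subst; auto. Qed.

Lemma hd_const (z : Cx) t : has_tderiv (fun _ => z) t Defs.C0.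
Proof. split; [dext (fct_cte (fst z)) ltac:(apply derivable_pt_lim_const) | dext (fct_cte (snd z)) ltac:(apply derivable_pt_lim_const)]. Qed.

Lemma hd_add f g t L K : has_tderiv f t L -> has_tderiv g t K ->
  has_tderiv (fun s => Cadd (f s) (g s)) t (Cadd L K).
Proof. intros [H1 H2] [H3 H4]; split;
  [ dext (plus_fct (fun s => fst (f s)) (fun s => fst (g s))) ltac:(apply derivable_pt_lim_plus; eauto)
  | dext (plus_fct (fun s => snd (f s)) (fun s => snd (g s))) ltac:(apply derivable_pt_lim_plus; eauto)]. Qed.

Lemma hd_opp f t L : has_tderiv f t L -> has_tderiv (fun s => Copp (f s)) t (Copp L).
Proof. intros [H1 H2]; split;
  [ dext (opp_fct (fun s => fst (f s))) ltac:(apply derivable_pt_lim_opp; eauto)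
  | dext (opp_fct (fun s => snd (f s))) ltac:(apply derivable_pt_lim_opp; eauto)]. Qed.

Lemma hd_conj f t L : has_tderiv f t L -> has_tderiv (fun s => Cconj (f s)) t (Cconj L).
Proof. intros [H1 H2]; split; simpl; auto.
  dext (opp_fct (fun s => snd (f s))) ltac:(apply derivable_pt_lim_opp; eauto). Qed.

Lemma hd_sub f g t L K : has_tderiv f t L -> has_tderiv g t K ->
  has_tderiv (fun s => Csub (f s) (g s)) t (Csub L K).
Proof. intros; apply hd_add; auto; apply hd_opp; auto. Qed.

Lemma hd_mul f g t L K : has_tderiv f t L -> has_tderiv g t K ->
  has_tderiv (fun s => Cmul (f s) (g s)) t (Cadd (Cmul L (g t)) (Cmul (f t) K)).
Proof. intros [H1 H2] [H3 H4]. split.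
  - dext (minus_fct (mult_fct (fun s => fst (f s)) (fun s => fst (g s)))
                               (mult_fct (fun s => snd (f s)) (fun s => snd (g s))))
    ltac:(apply derivable_pt_lim_minus; apply derivable_pt_lim_mult; eauto).
  - dext (plus_fct (mult_fct (fun s => fst (f s)) (fun s => snd (g s)))
                               (mult_fct (fun s => snd (f s)) (fun s => fst (g s))))
    ltac:(apply derivable_pt_lim_plus; apply derivable_pt_lim_mult; eauto).
Qed.

Lemma hdM_const (A : M2) t : has_tderiv_M2 (fun _ => A) t M0.
Proof. msplit; apply hd_const. Qed.

Lemma hdM_add F G t L K : has_tderiv_M2 F t L -> has_tderiv_M2 G t K ->
  has_tderiv_M2 (fun s => Madd (F s) (G s)) t (Madd L K).
Proof. intros (H1&H2&H3&H4) (K1&K2&K3&K4); msplit; simpl; apply hd_add; auto. Qed.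

Lemma hdM_sub F G t L K : has_tderiv_M2 F t L -> has_tderiv_M2 G t K ->
  has_tderiv_M2 (fun s => Msub (F s) (G s)) t (Msub L K).
Proof. intros (H1&H2&H3&H4) (K1&K2&K3&K4); msplit; simpl; apply hd_sub; auto. Qed.

Lemma hdM_scal (z : Cx) F t L : has_tderiv_M2 F t L ->
  has_tderiv_M2 (fun s => Mscal z (F s)) t (Mscal z L).
Proof. intros (H1&H2&H3&H4); msplit; simpl;
  (eapply hd_congr; [apply hd_mul; [apply hd_const | eauto] | cring]). Qed.

Lemma hdM_adj F t L : has_tderiv_M2 F t L -> has_tderiv_M2 (fun s => adj (F s)) t (adj L).
Proof. intros (H1&H2&H3&H4); msplit; simpl; auto; apply hd_opp; auto. Qed.

Lemma hdM_mul F G t L K : has_tderiv_M2 F t L -> has_tderiv_M2 G t K ->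
  has_tderiv_M2 (fun s => M2mul (F s) (G s)) t (Madd (M2mul L (G t)) (M2mul (F t) K)).
Proof. intros (H1&H2&H3&H4) (K1&K2&K3&K4); msplit; simpl;
  (eapply hd_congr; [apply hd_add; apply hd_mul; eauto | cring]). Qed.

Lemma hd_tr F t L : has_tderiv_M2 F t L -> has_tderiv (fun s => M2tr (F s)) t (M2tr L).
Proof. intros (H1&H2&H3&H4); apply hd_add; auto. Qed.


Lemma mvt_bound (f f' : R -> R) (K T : R) : 0 <= T ->
  (forall s, 0 <= s <= T -> derivable_pt_lim f s (f' s)) ->
  (forall s, 0 <= s <= T -> Rabs (f' s) <= K) -> Rabs (f T - f 0) <= K * T.
Proof.
  intros HT Hd Hb. destruct (Req_dec T 0) as [->|HT'].
  - rewrite Rminus_diag, Rabs_R0. lra.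
  - destruct (MVT_cor2 f f' 0 T) as [c [Hc1 Hc2]]; [lra| auto |].
    rewrite Hc1, Rabs_mult, Rminus_0_r, (Rabs_right T) by lra.
    apply Rmult_le_compat_r; [lra|]. apply Hb; lra.
Qed.

Lemma strict_incr (f f' : R -> R) (T : R) : 0 < T ->
  (forall s, 0 <= s <= T -> derivable_pt_lim f s (f' s)) ->
  (forall s, 0 <= s <= T -> 0 < f' s) -> f 0 < f T.
Proof.
  intros HT Hd Hb. destruct (MVT_cor2 f f' 0 T) as [c [Hc1 Hc2]]; [lra| auto |].
  assert (0 < f' c) by (apply Hb; lra). nra.
Qed.

Lemma mul_nonpos_r a b : a <= 0 -> 0 <= b -> a * b <= 0.
Proof. intros; nra. Qed.

Lemma gronwall (N N' : R -> R) (K T : R) :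
  (forall s, 0 <= s <= T -> derivable_pt_lim N s (N' s)) ->
  (forall s, 0 <= s <= T -> N' s <= K * N s) ->
  forall t, 0 <= t <= T -> N t <= N 0 * exp (K * t).
Proof.
  intros Hd Hb t Ht.
  set (phi := fun s => N s * exp (- K * s)).
  assert (Hphi : forall s, 0 <= s <= t -> derivable_pt_lim phi s ((N' s - K * N s) * exp (- K * s))).
  { intros s Hs. unfold phi.
    eapply (dpl_ext (mult_fct N (comp exp (mult_real_fct (-K) id)))); [intro; reflexivity | | ].
    - apply derivable_pt_lim_mult. apply Hd; lra.
      apply derivable_pt_lim_comp. apply derivable_pt_lim_scal. apply derivable_pt_lim_id.
      apply derivable_pt_lim_exp.
    - unfold comp, mult_real_fct, id. ring. }
  assert (phi t <= phi 0).
  { destruct (Req_dec t 0) as [->|Ht']; [lra|].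
    destruct (MVT_cor2 phi (fun s => (N' s - K * N s) * exp (- K * s)) 0 t) as [c [Hc1 Hc2]]; [lra| exact Hphi |].
    assert (N' c - K * N c <= 0) by (assert (Hcc : 0 <= c <= T) by lra; pose proof (Hb c Hcc); lra).
    assert (0 < exp (- K * c)) by apply exp_pos. cbv beta in Hc1.
    assert ((N' c - K * N c) * exp (- K * c) * (t - 0) <= 0) by (apply mul_nonpos_r; [|lra]; apply mul_nonpos_r; lra). lra. }
  unfold phi in H. rewrite Rmult_0_r, exp_0, Rmult_1_r in H.
  assert (exp (- K * t) * exp (K * t) = 1) by (rewrite <- exp_plus; replace (- K * t + K * t) with 0 by ring; apply exp_0).
  assert (0 < exp (K * t)) by apply exp_pos.
  assert (N t = N t * exp (- K * t) * exp (K * t)) by (rewrite Rmult_assoc, H0; ring).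
  rewrite H2. apply Rmult_le_compat_r; lra.
Qed.

Lemma antideriv (f : R -> R) (T : R) : 0 <= T -> (forall x, continuity_pt f x) ->
  exists g : R -> R, g 0 = 0 /\ forall t, 0 <= t <= T -> derivable_pt_lim g t (f t).
Proof.
  intros HT Hc.
  assert (C0' : forall x, 0 <= x <= T -> continuity_pt f x) by auto.
  set (P := primitive HT (FTC_P1 HT C0')).
  exists (fun s => P s - P 0). split; [ring|].
  intros t Ht. eapply (dpl_ext (minus_fct P (fct_cte (P 0)))); [intro; reflexivity| |].
  apply derivable_pt_lim_minus. apply RiemannInt_P28; auto. apply derivable_pt_lim_const. ring.
Qed.

Definition cn (z : Cx) : R := Rabs (fst z) + Rabs (snd z).
Definition mn (A : M2) : R := cn (m11 A) + cn (m12 A) + cn (m21 A) + cn (m22 A).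

Lemma cn_nn z : 0 <= cn z.
Proof. unfold cn; pose proof (Rabs_pos (fst z)); pose proof (Rabs_pos (snd z)); lra. Qed.
Lemma mn_nn A : 0 <= mn A.
Proof. unfold mn; pose proof (cn_nn (m11 A)); pose proof (cn_nn (m12 A)); pose proof (cn_nn (m21 A)); pose proof (cn_nn (m22 A)); lra. Qed.

Lemma Rabs_sub_le x y : Rabs (x - y) <= Rabs x + Rabs y.
Proof. unfold Rminus; eapply Rle_trans; [apply Rabs_triang|]; rewrite Rabs_Ropp; lra. Qed.

Lemma cn_add z w : cn (Cadd z w) <= cn z + cn w.
Proof. unfold cn; cx; simpl. pose proof (Rabs_triang (fst z) (fst w)); pose proof (Rabs_triang (snd z) (snd w)); lra. Qed.
Lemma cn_opp z : cn (Copp z) = cn z.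
Proof. unfold cn; cx; simpl; rewrite !Rabs_Ropp; ring. Qed.
Lemma cn_conj z : cn (Cconj z) = cn z.
Proof. unfold cn; cx; simpl; rewrite !Rabs_Ropp; ring. Qed.
Lemma cn_sub z w : cn (Csub z w) <= cn z + cn w.
Proof. unfold Csub; rewrite <- (cn_opp w); apply cn_add. Qed.
Lemma cn_mul z w : cn (Cmul z w) <= cn z * cn w.
Proof. unfold cn; cx; simpl.
  pose proof (Rabs_sub_le (fst z * fst w) (snd z * snd w)).
  pose proof (Rabs_triang (fst z * snd w) (snd z * fst w)).
  rewrite !Rabs_mult in *.
  pose proof (Rabs_pos (fst z)); pose proof (Rabs_pos (snd z)); pose proof (Rabs_pos (fst w)); pose proof (Rabs_pos (snd w)).
  nra. Qed.

Lemma mn_add A B : mn (Madd A B) <= mn A + mn B.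
Proof. unfold mn; mx; simpl.
  pose proof (cn_add (m11 A) (m11 B)); pose proof (cn_add (m12 A) (m12 B));
  pose proof (cn_add (m21 A) (m21 B)); pose proof (cn_add (m22 A) (m22 B)); lra. Qed.
Lemma mn_sub A B : mn (Msub A B) <= mn A + mn B.
Proof. unfold mn; mx; simpl.
  pose proof (cn_sub (m11 A) (m11 B)); pose proof (cn_sub (m12 A) (m12 B));
  pose proof (cn_sub (m21 A) (m21 B)); pose proof (cn_sub (m22 A) (m22 B)); lra. Qed.
Lemma mn_adj A : mn (adj A) = mn A.
Proof. unfold mn; mx; simpl; rewrite !cn_opp; ring. Qed.
Lemma mn_scal z A : mn (Mscal z A) <= cn z * mn A.
Proof. unfold mn; mx; simpl.
  pose proof (cn_mul z (m11 A)); pose proof (cn_mul z (m12 A));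
  pose proof (cn_mul z (m21 A)); pose proof (cn_mul z (m22 A)); lra. Qed.
Lemma mn_mul A B : mn (M2mul A B) <= mn A * mn B.
Proof. unfold mn; mx; simpl.
  repeat match goal with |- context [cn (Cadd (Cmul ?x ?y) (Cmul ?u ?v))] =>
    let H1 := fresh in let H2 := fresh in let H3 := fresh in
    pose proof (cn_add (Cmul x y) (Cmul u v)) as H1; pose proof (cn_mul x y) as H2; pose proof (cn_mul u v) as H3;
    set (cn (Cadd (Cmul x y) (Cmul u v))) in * end.
  pose proof (cn_nn (m11 A)); pose proof (cn_nn (m12 A)); pose proof (cn_nn (m21 A)); pose proof (cn_nn (m22 A)).
  pose proof (cn_nn (m11 B)); pose proof (cn_nn (m12 B)); pose proof (cn_nn (m21 B)); pose proof (cn_nn (m22 B)).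
  nra. Qed.
Lemma cn_tr A : cn (M2tr A) <= mn A.
Proof. unfold M2tr, mn. pose proof (cn_add (m11 A) (m22 A)).
  pose proof (cn_nn (m12 A)); pose proof (cn_nn (m21 A)); lra. Qed.

Lemma cn_le_mn A : cn (m11 A) <= mn A /\ cn (m12 A) <= mn A /\ cn (m21 A) <= mn A /\ cn (m22 A) <= mn A.
Proof. unfold mn; pose proof (cn_nn (m11 A)); pose proof (cn_nn (m12 A)); pose proof (cn_nn (m21 A)); pose proof (cn_nn (m22 A)); lra. Qed.
Lemma comp_le_cn z : Rabs (fst z) <= cn z /\ Rabs (snd z) <= cn z.
Proof. unfold cn; pose proof (Rabs_pos (fst z)); pose proof (Rabs_pos (snd z)); lra. Qed.

Lemma Rabs_eq_0 x : Rabs x <= 0 -> x = 0.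
Proof. intros. destruct (Req_dec x 0); auto. apply Rabs_no_R0 in H0. pose proof (Rabs_pos x). lra. Qed.

Lemma cn0 z : cn z <= 0 -> z = Defs.C0.
Proof. unfold cn; intros. pose proof (Rabs_pos (fst z)); pose proof (Rabs_pos (snd z)).
  apply Cext; cx; simpl; apply Rabs_eq_0; lra. Qed.
Lemma mn0 A : mn A <= 0 -> A = M0.
Proof. unfold mn; intros. pose proof (cn_nn (m11 A)); pose proof (cn_nn (m12 A)); pose proof (cn_nn (m21 A)); pose proof (cn_nn (m22 A)).
  apply Mext; simpl; apply cn0; lra. Qed.

Lemma Msub0 A B : Msub A B = M0 -> A = B.
Proof. intro H. apply Mext; apply Cext;
  match type of H with ?X = ?Y => assert (H1 := f_equal (fun M => fst (m11 M)) H); assert (H2 := f_equal (fun M => snd (m11 M)) H);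
  assert (H3 := f_equal (fun M => fst (m12 M)) H); assert (H4 := f_equal (fun M => snd (m12 M)) H);
  assert (H5 := f_equal (fun M => fst (m21 M)) H); assert (H6 := f_equal (fun M => snd (m21 M)) H);
  assert (H7 := f_equal (fun M => fst (m22 M)) H); assert (H8 := f_equal (fun M => snd (m22 M)) H) end;
  mxa; cxa; simpl in *; lra. Qed.

Lemma cnbound_comp z (K : R) : cn z <= K -> Rabs (fst z) <= K /\ Rabs (snd z) <= K.
Proof. pose proof (comp_le_cn z); lra. Qed.

Lemma mvtC (f f' : R -> Cx) K T : 0 <= T ->
  (forall s, 0 <= s <= T -> has_tderiv f s (f' s)) ->
  (forall s, 0 <= s <= T -> cn (f' s) <= K) -> cn (Csub (f T) (f 0)) <= 2 * K * T.
Proof. intros HT Hd Hb. unfold cn; cx; simpl.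
  assert (A1 := mvt_bound (fun s => fst (f s)) (fun s => fst (f' s)) K T HT ltac:(intros; apply Hd; auto)
     ltac:(intros; apply cnbound_comp; auto)).
  assert (A2 := mvt_bound (fun s => snd (f s)) (fun s => snd (f' s)) K T HT ltac:(intros; apply Hd; auto)
     ltac:(intros; apply cnbound_comp; auto)).
  simpl in *. unfold Rminus in *. lra. Qed.

Lemma mvtM (F F' : R -> M2) K T : 0 <= T ->
  (forall s, 0 <= s <= T -> has_tderiv_M2 F s (F' s)) ->
  (forall s, 0 <= s <= T -> mn (F' s) <= K) -> mn (Msub (F T) (F 0)) <= 8 * K * T.
Proof. intros HT Hd Hb. unfold mn; simpl.
  assert (A1 := mvtC (fun s => m11 (F s)) (fun s => m11 (F' s)) K T HT ltac:(intros; apply Hd; auto)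
    ltac:(intros; eapply Rle_trans; [apply cn_le_mn| apply Hb]; auto)).
  assert (A2 := mvtC (fun s => m12 (F s)) (fun s => m12 (F' s)) K T HT ltac:(intros; apply Hd; auto)
    ltac:(intros; eapply Rle_trans; [apply cn_le_mn| apply Hb]; auto)).
  assert (A3 := mvtC (fun s => m21 (F s)) (fun s => m21 (F' s)) K T HT ltac:(intros; apply Hd; auto)
    ltac:(intros; eapply Rle_trans; [apply cn_le_mn| apply Hb]; auto)).
  assert (A4 := mvtC (fun s => m22 (F s)) (fun s => m22 (F' s)) K T HT ltac:(intros; apply Hd; auto)
    ltac:(intros; eapply Rle_trans; [apply cn_le_mn| apply Hb]; auto)).
  simpl in *; lra. Qed.


Definition mx11 (a nu : R) (sg : Cx) : Cx := (- snd sg / a, (fst sg - a * nu) / a).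
Definition Mx (a nu : R) (c : R -> Cx) (sg : Cx) (t : R) : M2 :=
  mkM2 (mx11 a nu sg) (fst (c t) / a, snd (c t) / a) (fst (c t) / a, - snd (c t) / a) (Copp (mx11 a nu sg)).
Definition Jm (a : R) : M2 := mkM2 (0, / a) Defs.C0 Defs.C0 (0, - / a).

Lemma Msys0 a b nu c t sg : 0 < a -> Msys a b nu c t sg 0 = Mx a nu c sg t.
Proof. intro ha. unfold Msys, Mx, mx11, lam. cx. simpl. replace (b * 0) with 0 by ring.
  apply Mext; simpl; apply Cext; simpl; field; lra. Qed.

Lemma Mx_diff a nu c t s1 s2 : 0 < a ->
  Msub (Mx a nu c s2 t) (Mx a nu c s1 t) = Mscal (Csub s2 s1) (Jm a).
Proof. intro ha. unfold Mx, mx11, Jm. mx. apply Mext; simpl; apply Cext; cx; simpl; field; lra. Qed.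

Definition Fund0 a nu c V := forall sg, V 0 sg 0 = M2id /\
  forall t, has_tderiv_M2 (fun s => V s sg 0) t (M2mul (Mx a nu c sg t) (V t sg 0)).

Lemma fund0_of a b nu c V : 0 < a -> is_fundamental a b nu c V -> Fund0 a nu c V.
Proof. intros ha H sg. destruct (H sg 0) as [H1 H2]. split; auto. intro t. rewrite <- Msys0 with (b := b); auto. Qed.

Lemma d_adjmul V X A B t : has_tderiv_M2 V t (M2mul A (V t)) -> has_tderiv_M2 X t (M2mul B (X t)) ->
  m22 A = Copp (m11 A) ->
  has_tderiv_M2 (fun s => M2mul (adj (V s)) (X s)) t (M2mul (adj (V t)) (M2mul (Msub B A) (X t))).
Proof. intros H1 H2 HA. eapply hdM_congr; [apply hdM_mul; [apply hdM_adj; eauto | eauto] |].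
  destruct A as [a11 a12 a21 a22]; simpl in HA; subst a22. mx; mring. Qed.

Lemma adj_l A : det A = Defs.C1 -> M2mul (adj A) A = M2id.
Proof. intro H. transitivity (Mscal (det A) M2id). mx; mring. rewrite H. mx; mring. Qed.
Lemma adj_r A : det A = Defs.C1 -> M2mul A (adj A) = M2id.
Proof. intro H. transitivity (Mscal (det A) M2id). mx; mring. rewrite H. mx; mring. Qed.

Lemma det_one a nu c V sg t : Fund0 a nu c V -> 0 <= t -> det (V t sg 0) = Defs.C1.
Proof. intros hV Ht. destruct (hV sg) as [H0 Hd].
  assert (Hdd : forall s, 0 <= s <= t -> has_tderiv (fun s => det (V s sg 0)) s Defs.C0).
  { intros s _. unfold det. eapply hd_congr.
    apply hd_sub; apply hd_mul; apply Hd.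
    unfold Mx. mx. simpl. cx. apply Cext; simpl; ring. }
  pose proof (mvtC _ _ 0 t Ht Hdd ltac:(intros; unfold cn; simpl; rewrite Rabs_R0; lra)).
  cbv beta in H. rewrite H0 in H. replace (2 * 0 * t) with 0 in H by ring. apply cn0 in H.
  assert (det M2id = Defs.C1) by (mx; cring).
  rewrite <- H1. destruct (det (V t sg 0)) as [x y] eqn:E. revert H. mx; cx. intro H.
  simpl in *. injection H; intros. apply Cext; simpl; lra. Qed.


Lemma cs8 y1 y2 y3 y4 y5 y6 y7 y8 : (y1 + y2 + y3 + y4 + y5 + y6 + y7 + y8)^2 <= 8 * (y1^2 + y2^2 + y3^2 + y4^2 + y5^2 + y6^2 + y7^2 + y8^2).
Proof.
  assert (8 * (y1^2 + y2^2 + y3^2 + y4^2 + y5^2 + y6^2 + y7^2 + y8^2) - (y1 + y2 + y3 + y4 + y5 + y6 + y7 + y8)^2 = (y1 - y2)^2 + (y1 - y3)^2 + (y1 - y4)^2 + (y1 - y5)^2 + (y1 - y6)^2 + (y1 - y7)^2 + (y1 - y8)^2 + (y2 - y3)^2 + (y2 - y4)^2 + (y2 - y5)^2 + (y2 - y6)^2 + (y2 - y7)^2 + (y2 - y8)^2 + (y3 - y4)^2 + (y3 - y5)^2 + (y3 - y6)^2 + (y3 - y7)^2 + (y3 - y8)^2 + (y4 - y5)^2 + (y4 - y6)^2 + (y4 - y7)^2 + (y4 - y8)^2 + (y5 - y6)^2 + (y5 - y7)^2 + (y5 - y8)^2 + (y6 - y7)^2 + (y6 - y8)^2 + (y7 -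 y8)^2) by ring.
  assert (0 <= (y1 - y2)^2 + (y1 - y3)^2 + (y1 - y4)^2 + (y1 - y5)^2 + (y1 - y6)^2 + (y1 - y7)^2 + (y1 - y8)^2 + (y2 - y3)^2 + (y2 - y4)^2 + (y2 - y5)^2 + (y2 - y6)^2 + (y2 - y7)^2 + (y2 - y8)^2 + (y3 - y4)^2 + (y3 - y5)^2 + (y3 - y6)^2 + (y3 - y7)^2 + (y3 - y8)^2 + (y4 - y5)^2 + (y4 - y6)^2 + (y4 - y7)^2 + (y4 - y8)^2 + (y5 - y6)^2 + (y5 - y7)^2 + (y5 - y8)^2 + (y6 - y7)^2 + (y6 - y8)^2 + (y7 - y8)^2) by (repeat apply Rplus_le_le_0_compat; apply pow2_ge_0).
  lra. Qed.

Definition nqc (z : Cx) : Cx := Cmul z (Cconj z).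
Definition nq (A : M2) : Cx := Cadd (Cadd (nqc (m11 A)) (nqc (m12 A))) (Cadd (nqc (m21 A)) (nqc (m22 A))).
Definition dotc (z w : Cx) : R := fst z * fst w + snd z * snd w.
Definition dot8 (A L : M2) : R := dotc (m11 A) (m11 L) + dotc (m12 A) (m12 L) + dotc (m21 A) (m21 L) + dotc (m22 A) (m22 L).

Lemma nq_deriv F t L : has_tderiv_M2 F t L ->
  derivable_pt_lim (fun s => fst (nq (F s))) t (2 * dot8 (F t) L).
Proof. intros (H1&H2&H3&H4).
  assert (H : has_tderiv (fun s => nq (F s)) t
    (Cadd (Cadd (Cadd (Cmul (m11 L) (Cconj (m11 (F t)))) (Cmul (m11 (F t)) (Cconj (m11 L))))
                (Cadd (Cmul (m12 L) (Cconj (m12 (F t)))) (Cmul (m12 (F t)) (Cconj (m12 L)))))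
          (Cadd (Cadd (Cmul (m21 L) (Cconj (m21 (F t)))) (Cmul (m21 (F t)) (Cconj (m21 L))))
                (Cadd (Cmul (m22 L) (Cconj (m22 (F t)))) (Cmul (m22 (F t)) (Cconj (m22 L))))))).
  { unfold nq, nqc. repeat apply hd_add; apply hd_mul; auto; apply hd_conj; auto. }
  destruct H as [H _]. eapply dpl_ext; [intro; reflexivity | exact H |]. unfold dot8, dotc. cx; simpl; ring. Qed.

Lemma dotc_le z w K : cn w <= K -> dotc z w <= K * cn z.
Proof. unfold dotc, cn; intros.
  pose proof (Rle_abs (fst z * fst w)); pose proof (Rle_abs (snd z * snd w)).
  rewrite Rabs_mult in *. pose proof (comp_le_cn w). unfold cn in H2.
  pose proof (Rabs_pos (fst z)); pose proof (Rabs_pos (snd z)).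
  assert (Rabs (fst z) * Rabs (fst w) <= Rabs (fst z) * K) by (apply Rmult_le_compat_l; lra).
  assert (Rabs (snd z) * Rabs (snd w) <= Rabs (snd z) * K) by (apply Rmult_le_compat_l; lra).
  lra. Qed.

Lemma dot8_le A L : dot8 A L <= mn L * mn A.
Proof. unfold dot8. destruct (cn_le_mn L) as (a1&a2&a3&a4).
  pose proof (dotc_le (m11 A) (m11 L) _ a1); pose proof (dotc_le (m12 A) (m12 L) _ a2);
  pose proof (dotc_le (m21 A) (m21 L) _ a3); pose proof (dotc_le (m22 A) (m22 L) _ a4).
  unfold mn at 2. lra. Qed.

Lemma mn_sq A : mn A ^ 2 <= 8 * fst (nq A).
Proof. unfold mn, cn, nq, nqc. cx. simpl.
  pose proof (cs8 (Rabs (fst (m11 A))) (Rabs (snd (m11 A))) (Rabs (fst (m12 A))) (Rabs (snd (m12 A)))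
                  (Rabs (fst (m21 A))) (Rabs (snd (m21 A))) (Rabs (fst (m22 A))) (Rabs (snd (m22 A)))).
  rewrite !pow2_abs in H. repeat rewrite <- Rplus_assoc in *.
  match goal with H : ?x <= 8 * ?y |- ?x' <= 8 * ?z => replace x' with x by ring; replace z with y by ring end.
  exact H. Qed.

Lemma Rabs_div_pos x a : 0 < a -> Rabs (x / a) = Rabs x / a.
Proof. intro. unfold Rdiv. rewrite Rabs_mult, Rabs_inv, (Rabs_right a) by lra. reflexivity. Qed.

Lemma mn_Mx a nu c s t : 0 < a -> mn (Mx a nu c s t) <= 2 * (cn s + Rabs (a * nu)) / a + 2 * cn (c t) / a.
Proof. intro ha. unfold mn, Mx, mx11, cn; cx; simpl.
  rewrite !Rabs_div_pos by lra. rewrite !Rabs_Ropp.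
  unfold Rdiv in *. rewrite !Ropp_mult_distr_l_reverse, !Rabs_Ropp.
  rewrite !Rabs_mult, Rabs_inv, (Rabs_right a) by lra.
  pose proof (Rabs_sub_le (fst s) (a * nu)). rewrite Rabs_mult, (Rabs_right a) in H by lra.
  assert (0 < / a) by (apply Rinv_0_lt_compat; lra).
  assert (Rabs (fst s - a * nu) * / a <= (Rabs (fst s) + a * Rabs nu) * / a) by (apply Rmult_le_compat_r; lra).
  assert (a * / a = 1) by (field; lra).
  assert (a * Rabs nu * / a = Rabs nu) by (field; lra).
  nra. Qed.

Definition ccont (c : R -> Cx) := forall x, continuity_pt (fun s => fst (c s)) x /\ continuity_pt (fun s => snd (c s)) x.

Lemma c_bound c : ccont c -> exists cm, 0 <= cm /\ forall t, 0 <= t <= 2 * PI -> cn (c t) <= cm.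
Proof. intro hc.
  set (f := plus_fct (comp Rabs (fun s => fst (c s))) (comp Rabs (fun s => snd (c s)))).
  assert (Hf : forall x, 0 <= x <= 2 * PI -> continuity_pt f x).
  { intros x _. unfold f. apply continuity_pt_plus; apply continuity_pt_comp; try apply hc; apply Rcontinuity_abs. }
  destruct (continuity_ab_maj f 0 (2 * PI)) as [x0 [H1 H2]]; [pose proof PI_RGT_0; lra | exact Hf |].
  exists (f x0). split. unfold f, plus_fct, comp. pose proof (Rabs_pos (fst (c x0))); pose proof (Rabs_pos (snd (c x0))); lra.
  intros t Ht. apply H1 in Ht. exact Ht. Qed.

Lemma exp_le x y : x <= y -> exp x <= exp y.
Proof. intro H. destruct (Req_dec x y) as [->|]; [lra|]. left; apply exp_increasing; lra. Qed.

Lemma Vbound a nu c V sg : 0 < a -> Fund0 a nu c V -> ccont c ->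
  exists B, 0 < B /\ forall h t, cn h <= 1 -> 0 <= t <= 2 * PI -> mn (V t (Cadd sg h) 0) <= B.
Proof. intros ha hV hc. destruct (c_bound c hc) as [cm [Hcm0 Hcm]].
  set (m := (2 * (cn sg + 1 + Rabs (a * nu)) + 2 * cm) * / a).
  assert (Hia : 0 < / a) by (apply Rinv_0_lt_compat; lra).
  assert (Hm0 : 0 <= m). { unfold m. pose proof (cn_nn sg); pose proof (Rabs_pos (a*nu)). apply Rmult_le_pos; lra. }
  set (E := 16 * exp (16 * m * (2 * PI))).
  exists (1 + E). split. { unfold E; pose proof (exp_pos (16 * m * (2 * PI))). lra. }
  intros h t Hh Ht. set (s' := Cadd sg h).
  assert (Hs' : cn s' <= cn sg + 1) by (pose proof (cn_add sg h); unfold s'; lra).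
  assert (HM : forall u, 0 <= u <= 2 * PI -> mn (Mx a nu c s' u) <= m).
  { intros u Hu. eapply Rle_trans; [apply mn_Mx; auto|]. unfold m, Rdiv.
    match goal with |- ?L <= _ => replace L with ((2 * (cn s' + Rabs (a * nu)) + 2 * cn (c u)) * / a) by ring end.
    apply Rmult_le_compat_r; [lra|].
    pose proof (Hcm u Hu). lra. }
  destruct (hV s') as [H0 Hd].
  assert (G := gronwall (fun u => fst (nq (V u s' 0))) (fun u => 2 * dot8 (V u s' 0) (M2mul (Mx a nu c s' u) (V u s' 0)))
     (16 * m) (2 * PI) ltac:(intros; apply (nq_deriv (fun u => V u s' 0)); apply Hd)).
  assert (G2 : fst (nq (V t s' 0)) <= fst (nq (V 0 s' 0)) * exp (16 * m * t)).
  { apply G; auto. intros u Hu.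
    pose proof (dot8_le (V u s' 0) (M2mul (Mx a nu c s' u) (V u s' 0))).
    pose proof (mn_mul (Mx a nu c s' u) (V u s' 0)). pose proof (HM u Hu).
    pose proof (mn_nn (V u s' 0)). pose proof (mn_nn (Mx a nu c s' u)).
    pose proof (mn_sq (V u s' 0)).
    assert (mn (M2mul (Mx a nu c s' u) (V u s' 0)) <= m * mn (V u s' 0)).
    { eapply Rle_trans; [eassumption|]. apply Rmult_le_compat_r; auto. }
    assert (mn (M2mul (Mx a nu c s' u) (V u s' 0)) * mn (V u s' 0) <= m * mn (V u s' 0) * mn (V u s' 0))
      by (apply Rmult_le_compat_r; auto).
    nra. }
  rewrite H0 in G2. replace (fst (nq M2id)) with 2 in G2 by (unfold nq, nqc; mx; cx; simpl; ring).
  pose proof (mn_sq (V t s' 0)).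
  assert (exp (16 * m * t) <= exp (16 * m * (2 * PI))) by (apply exp_le; nra).
  assert (mn (V t s' 0) ^ 2 <= E) by (unfold E; lra).
  pose proof (mn_nn (V t s' 0)). nra. Qed.


Lemma mn_mul3 A X Y : mn (M2mul A (M2mul X Y)) <= mn A * (mn X * mn Y).
Proof. eapply Rle_trans; [apply mn_mul|]. apply Rmult_le_compat_l; [apply mn_nn| apply mn_mul]. Qed.

Lemma mn_J a : 0 < a -> mn (Jm a) = 2 * / a.
Proof. intro ha. unfold mn, Jm, cn; cx; simpl. rewrite ?Ropp_0, ?Rabs_R0, ?Rabs_Ropp.
  rewrite Rabs_right. ring. left; apply Rinv_0_lt_compat; lra. Qed.

Lemma Cadd0 z : Cadd z Defs.C0 = z.
Proof. cring. Qed.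
Lemma Csub_add z h : Csub (Cadd z h) z = h.
Proof. cring. Qed.

Lemma PI2 : 0 < 2 * PI.
Proof. pose proof PI_RGT_0; lra. Qed.

Definition Wm a (V : R -> Cx -> R -> M2) sg t := M2mul (adj (V t sg 0)) (M2mul (Jm a) (V t sg 0)).

Lemma Vcont a nu c V sg : 0 < a -> Fund0 a nu c V -> ccont c ->
  exists B C, 0 < B /\ 0 <= C /\ forall h t, cn h <= 1 -> 0 <= t <= 2 * PI ->
    mn (V t (Cadd sg h) 0) <= B /\ mn (Msub (V t (Cadd sg h) 0) (V t sg 0)) <= C * cn h.
Proof. intros ha hV hc. destruct (Vbound a nu c V sg ha hV hc) as [B [HB0 HB]].
  assert (HBs : forall t, 0 <= t <= 2 * PI -> mn (V t sg 0) <= B).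
  { intros t Ht. rewrite <- (Cadd0 sg). apply HB; auto. unfold cn; simpl; rewrite Rabs_R0; lra. }
  set (C := B * (8 * (B * (2 * / a) * B) * (2 * PI))).
  assert (Hia : 0 < / a) by (apply Rinv_0_lt_compat; lra).
  exists B, C. split; auto. split. { unfold C. pose proof PI2. apply Rmult_le_pos; [lra|].
    apply Rmult_le_pos; [|lra]. apply Rmult_le_pos; [lra|]. apply Rmult_le_pos; [|lra]. apply Rmult_le_pos; lra. }
  intros h t Hh Ht. split; [apply HB; auto|].
  destruct (hV sg) as [H0 Hd]. destruct (hV (Cadd sg h)) as [H0' Hd'].
  assert (HE := mvtM (fun u => M2mul (adj (V u sg 0)) (V u (Cadd sg h) 0))
                     (fun u => M2mul (adj (V u sg 0)) (M2mul (Msub (Mx a nu c (Cadd sg h) u) (Mx a nu c sg u)) (V u (Cadd sg h) 0)))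
                     (B * (cn h * (2 * / a)) * B) t ltac:(lra)
                     ltac:(intros; apply (d_adjmul (fun u => V u sg 0) (fun u => V u (Cadd sg h) 0)); auto)).
  assert (HE' : mn (Msub (M2mul (adj (V t sg 0)) (V t (Cadd sg h) 0)) (M2mul (adj (V 0 sg 0)) (V 0 (Cadd sg h) 0))) <= 8 * (B * (cn h * (2 * / a)) * B) * t).
  { apply HE. intros u Hu. rewrite Mx_diff by auto. rewrite Csub_add.
    eapply Rle_trans; [apply mn_mul3|]. rewrite mn_adj.
    assert (mn (Mscal h (Jm a)) <= cn h * (2 * / a)) by (rewrite <- mn_J by auto; apply mn_scal).
    assert (mn (V u (Cadd sg h) 0) <= B) by (apply HB; auto; lra). assert (mn (V u sg 0) <= B) by (apply HBs; lra).
    pose proof (mn_nn (V u sg 0)); pose proof (mn_nn (V u (Cadd sg h) 0)); pose proof (mn_nn (Mscal h (Jm a))); pose proof (cn_nn h).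
    replace (B * (cn h * (2 * / a)) * B) with (B * ((cn h * (2 * / a)) * B)) by ring.
    apply Rmult_le_compat; [lra| apply Rmult_le_pos; lra | lra | apply Rmult_le_compat; lra]. }
  rewrite H0, H0' in HE'. replace (M2mul (adj M2id) M2id) with M2id in HE' by (mx; mring).
  assert (Hdet : det (V t sg 0) = Defs.C1) by (apply (det_one a nu c V); auto; lra).
  replace (Msub (V t (Cadd sg h) 0) (V t sg 0)) with (M2mul (V t sg 0) (Msub (M2mul (adj (V t sg 0)) (V t (Cadd sg h) 0)) M2id)).
  2: { transitivity (Msub (M2mul (M2mul (V t sg 0) (adj (V t sg 0))) (V t (Cadd sg h) 0)) (V t sg 0)); [mx; mring|].
       rewrite adj_r by auto. mx; mring. }
  eapply Rle_trans; [apply mn_mul|].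
  assert (8 * (B * (cn h * (2 * / a)) * B) * t <= 8 * (B * (2 * / a) * B) * (2 * PI) * cn h).
  { pose proof (cn_nn h). assert (0 <= B * (2 * / a) * B) by (apply Rmult_le_pos; [|lra]; apply Rmult_le_pos; lra).
    replace (8 * (B * (cn h * (2 * / a)) * B) * t) with ((8 * (B * (2 * / a) * B) * cn h) * t) by ring.
    replace (8 * (B * (2 * / a) * B) * (2 * PI) * cn h) with ((8 * (B * (2 * / a) * B) * cn h) * (2 * PI)) by ring.
    apply Rmult_le_compat_l; [|lra]. apply Rmult_le_pos; lra. }
  pose proof (HBs t Ht). pose proof (mn_nn (Msub (M2mul (adj (V t sg 0)) (V t (Cadd sg h) 0)) M2id)).
  pose proof (mn_nn (V t sg 0)). unfold C.
  assert (mn (V t sg 0) * mn (Msub (M2mul (adj (V t sg 0)) (V t (Cadd sg h) 0)) M2id) <= B * (8 * (B * (2 * / a) * B) * (2 * PI) * cn h))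
    by (apply Rmult_le_compat; lra).
  lra. Qed.


Lemma hd_cont f x L : has_tderiv f x L ->
  continuity_pt (fun s => fst (f s)) x /\ continuity_pt (fun s => snd (f s)) x.
Proof. intros [H1 H2]. split; apply derivable_continuous_pt; eexists; eauto. Qed.

Lemma W_deriv a nu c V sg t : Fund0 a nu c V -> exists L, has_tderiv_M2 (Wm a V sg) t L.
Proof. intro hV. destruct (hV sg) as [_ Hd]. eexists. unfold Wm.
  apply hdM_mul. apply hdM_adj. apply Hd. apply hdM_mul. apply hdM_const. apply Hd. Qed.

Lemma Gex a nu c V sg : Fund0 a nu c V ->
  exists G : R -> M2, G 0 = M0 /\ forall t, 0 <= t <= 2 * PI -> has_tderiv_M2 G t (Wm a V sg t).
Proof. intro hV.
  assert (HC : forall x, (continuity_pt (fun s => fst (m11 (Wm a V sg s))) x /\ continuity_pt (fun s => snd (m11 (Wm a V sg s))) x) /\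
                         (continuity_pt (fun s => fst (m12 (Wm a V sg s))) x /\ continuity_pt (fun s => snd (m12 (Wm a V sg s))) x) /\
                         (continuity_pt (fun s => fst (m21 (Wm a V sg s))) x /\ continuity_pt (fun s => snd (m21 (Wm a V sg s))) x) /\
                         (continuity_pt (fun s => fst (m22 (Wm a V sg s))) x /\ continuity_pt (fun s => snd (m22 (Wm a V sg s))) x)).
  { intro x. destruct (W_deriv a nu c V sg x hV) as [L (H1&H2&H3&H4)].
    split; [|split; [|split]]; eapply hd_cont; eauto. }
  pose proof (PI2) as HP. assert (HP' : 0 <= 2 * PI) by lra.
  destruct (antideriv _ _ HP' (fun x => proj1 (proj1 (HC x)))) as [g1 [g10 Hg1]].
  destruct (antideriv _ _ HP' (fun x => proj2 (proj1 (HC x)))) as [g2 [g20 Hg2]].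
  destruct (antideriv _ _ HP' (fun x => proj1 (proj1 (proj2 (HC x))))) as [g3 [g30 Hg3]].
  destruct (antideriv _ _ HP' (fun x => proj2 (proj1 (proj2 (HC x))))) as [g4 [g40 Hg4]].
  destruct (antideriv _ _ HP' (fun x => proj1 (proj1 (proj2 (proj2 (HC x)))))) as [g5 [g50 Hg5]].
  destruct (antideriv _ _ HP' (fun x => proj2 (proj1 (proj2 (proj2 (HC x)))))) as [g6 [g60 Hg6]].
  destruct (antideriv _ _ HP' (fun x => proj1 (proj2 (proj2 (proj2 (HC x)))))) as [g7 [g70 Hg7]].
  destruct (antideriv _ _ HP' (fun x => proj2 (proj2 (proj2 (proj2 (HC x)))))) as [g8 [g80 Hg8]].
  exists (fun s => mkM2 (g1 s, g2 s) (g3 s, g4 s) (g5 s, g6 s) (g7 s, g8 s)). split.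
  - unfold M0; cx; rewrite g10, g20, g30, g40, g50, g60, g70, g80; reflexivity.
  - intros t Ht. msplit; split; simpl; auto.
Qed.

Lemma first_order a nu c V sg (G : R -> M2) : 0 < a -> Fund0 a nu c V -> ccont c ->
  G 0 = M0 -> (forall t, 0 <= t <= 2 * PI -> has_tderiv_M2 G t (Wm a V sg t)) ->
  exists K, 0 <= K /\ forall h t, cn h <= 1 -> 0 <= t <= 2 * PI ->
    mn (Msub (Msub (M2mul (adj (V t sg 0)) (V t (Cadd sg h) 0)) M2id) (Mscal h (G t))) <= K * cn h ^ 2.
Proof. intros ha hV hc HG0 HG.
  destruct (Vcont a nu c V sg ha hV hc) as [B [C [HB0 [HC0 HBC]]]].
  assert (HBs : forall t, 0 <= t <= 2 * PI -> mn (V t sg 0) <= B).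
  { intros t Ht. rewrite <- (Cadd0 sg). apply HBC; auto. unfold cn; simpl; rewrite Rabs_R0; lra. }
  assert (Hia : 0 < / a) by (apply Rinv_0_lt_compat; lra).
  exists (8 * (B * (2 * / a * C)) * (2 * PI)). split.
  { pose proof PI2. apply Rmult_le_pos; [|lra]. apply Rmult_le_pos; [lra|]. apply Rmult_le_pos; [lra|]. apply Rmult_le_pos; lra. }
  intros h t Hh Ht.
  destruct (hV sg) as [H0 Hd]. destruct (hV (Cadd sg h)) as [H0' Hd'].
  assert (HE := mvtM (fun u => Msub (Msub (M2mul (adj (V u sg 0)) (V u (Cadd sg h) 0)) M2id) (Mscal h (G u)))
     (fun u => Mscal h (M2mul (adj (V u sg 0)) (M2mul (Jm a) (Msub (V u (Cadd sg h) 0) (V u sg 0)))))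
     (cn h * (B * (2 * / a * (C * cn h)))) t ltac:(lra)).
  cbv beta in HE. rewrite HG0, H0, H0' in HE.
  replace (Msub (Msub (M2mul (adj M2id) M2id) M2id) (Mscal h M0)) with M0 in HE by (mx; mring).
  replace (Msub (Msub (Msub (M2mul (adj (V t sg 0)) (V t (Cadd sg h) 0)) M2id) (Mscal h (G t))) M0)
    with (Msub (Msub (M2mul (adj (V t sg 0)) (V t (Cadd sg h) 0)) M2id) (Mscal h (G t))) in HE by (mx; mring).
  eapply Rle_trans; [apply HE|].
  - intros u Hu. eapply hdM_congr.
    apply hdM_sub. apply hdM_sub. apply (d_adjmul (fun u => V u sg 0) (fun u => V u (Cadd sg h) 0)); auto.
    apply hdM_const. apply hdM_scal. apply HG. lra.
    rewrite Mx_diff, Csub_add by auto. unfold Wm. mx; mring.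
  - intros u Hu. eapply Rle_trans; [apply mn_scal|]. apply Rmult_le_compat_l; [apply cn_nn|].
    eapply Rle_trans; [apply mn_mul3|]. rewrite mn_adj, mn_J by auto.
    assert (mn (V u sg 0) <= B) by (apply HBs; lra).
    assert (mn (Msub (V u (Cadd sg h) 0) (V u sg 0)) <= C * cn h) by (apply HBC; auto; lra).
    pose proof (mn_nn (V u sg 0)); pose proof (mn_nn (Msub (V u (Cadd sg h) 0) (V u sg 0))).
    apply Rmult_le_compat; [lra| apply Rmult_le_pos; lra | lra | apply Rmult_le_compat_l; lra].
  - pose proof (cn_nn h).
    assert (0 <= 8 * (B * (2 * / a * C)) * cn h ^ 2) by (apply Rmult_le_pos; [|nra]; apply Rmult_le_pos; [lra|]; apply Rmult_le_pos; [lra|]; apply Rmult_le_pos; lra).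
    replace (8 * (cn h * (B * (2 * / a * (C * cn h)))) * t) with ((8 * (B * (2 * / a * C)) * cn h ^ 2) * t) by ring.
    replace (8 * (B * (2 * / a * C)) * (2 * PI) * cn h ^ 2) with ((8 * (B * (2 * / a * C)) * cn h ^ 2) * (2 * PI)) by ring.
    apply Rmult_le_compat_l; lra.
Qed.


Lemma Cnorm_facts z : 0 <= Cnorm z /\ Cnorm z * Cnorm z = fst z ^ 2 + snd z ^ 2.
Proof. unfold Cnorm. split. apply sqrt_pos. apply sqrt_sqrt. nra. Qed.

Lemma Cnorm_le_cn z : Cnorm z <= cn z.
Proof. destruct (Cnorm_facts z) as [H1 H2]. unfold cn.
  pose proof (Rabs_pos (fst z)); pose proof (Rabs_pos (snd z)).
  pose proof (pow2_abs (fst z)); pose proof (pow2_abs (snd z)). nra. Qed.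

Lemma cn_le_Cnorm z : cn z <= 2 * Cnorm z.
Proof. destruct (Cnorm_facts z) as [H1 H2]. unfold cn.
  pose proof (Rabs_pos (fst z)); pose proof (Rabs_pos (snd z)).
  pose proof (pow2_abs (fst z)); pose proof (pow2_abs (snd z)).
  assert (Rabs (fst z) <= Cnorm z) by nra. assert (Rabs (snd z) <= Cnorm z) by nra. lra. Qed.

Lemma Cnorm_mul z w : Cnorm (Cmul z w) = Cnorm z * Cnorm w.
Proof. unfold Cnorm. rewrite <- sqrt_mult_alt by nra. f_equal. cx; simpl; ring. Qed.

Lemma Cnorm_pos h : h <> Defs.C0 -> 0 < Cnorm h.
Proof. intro H. destruct (Cnorm_facts h) as [H1 H2]. destruct (Req_dec (Cnorm h) 0); [|lra].
  exfalso. apply H. rewrite H0 in H2. apply Cext; cx; simpl; nra. Qed.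

Lemma cderiv_crit (f : Cx -> Cx) z L K d0 : 0 < d0 -> 0 <= K ->
  (forall h, h <> Defs.C0 -> cn h <= d0 -> cn (Csub (Csub (f (Cadd z h)) (f z)) (Cmul h L)) <= K * cn h ^ 2) ->
  has_cderiv f z L.
Proof. intros Hd0 HK H eps Heps.
  set (delta := Rmin (d0 / 2) (eps / (4 * (K + 1)))).
  assert (Hdl : 0 < delta) by (apply Rmin_pos; apply Rdiv_lt_0_compat; lra).
  exists delta. split; auto. intros h Hh Hnh.
  assert (Hd1 : delta <= d0 / 2) by apply Rmin_l.
  assert (Hd2 : delta <= eps / (4 * (K + 1))) by apply Rmin_r.
  pose proof (cn_le_Cnorm h). pose proof (Cnorm_pos h Hh).
  assert (Hch : cn h <= d0) by lra.
  specialize (H h Hh Hch).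
  set (Y := Csub (Csub (f (Cadd z h)) (f z)) (Cmul h L)) in *.
  set (X := Csub (Cdiv (Csub (f (Cadd z h)) (f z)) h) L).
  assert (HXY : Cmul X h = Y).
  { unfold X, Y. destruct (Cnorm_facts h) as [_ Hn]. assert (fst h ^ 2 + snd h ^ 2 <> 0) by nra.
    cx; apply Cext; simpl; field; auto; intro HH; apply H2; nra. }
  assert (HY : Cnorm X * Cnorm h <= K * (2 * Cnorm h) ^ 2).
  { rewrite <- Cnorm_mul, HXY. eapply Rle_trans; [apply Cnorm_le_cn|]. eapply Rle_trans; [exact H|].
    apply Rmult_le_compat_l; auto. pose proof (cn_nn h). nra. }
  assert (HX : Cnorm X <= 4 * K * Cnorm h).
  { apply Rmult_le_reg_r with (Cnorm h); auto. nra. }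
  assert (4 * K * Cnorm h <= 4 * K * delta) by (apply Rmult_le_compat_l; lra).
  assert (4 * K * delta <= 4 * K * (eps / (4 * (K + 1)))) by (apply Rmult_le_compat_l; lra).
  assert (4 * K * (eps / (4 * (K + 1))) < eps).
  { replace (4 * K * (eps / (4 * (K + 1)))) with (eps * (K / (K + 1))) by (field; lra).
    assert (K / (K + 1) < 1) by (apply (Rmult_lt_reg_r (K + 1)); [lra|]; unfold Rdiv; rewrite Rmult_assoc, Rinv_l by lra; lra). nra. }
  lra. Qed.


Definition GSpec a (V : R -> Cx -> R -> M2) (Gf : Cx -> R -> M2) :=
  forall sg, Gf sg 0 = M0 /\ forall t, 0 <= t <= 2 * PI -> has_tderiv_M2 (Gf sg) t (Wm a V sg t).

Lemma PI2' : 0 <= 2 * PI <= 2 * PI.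
Proof. pose proof PI2; lra. Qed.

Lemma tr_alg V1 V2 G h : det V1 = Defs.C1 ->
  Csub (Csub (M2tr V2) (M2tr V1)) (Cmul h (M2tr (M2mul V1 G)))
  = M2tr (M2mul V1 (Msub (Msub (M2mul (adj V1) V2) M2id) (Mscal h G))).
Proof. intro Hdet. transitivity (M2tr (Msub (Msub (M2mul (M2mul V1 (adj V1)) V2) V1) (Mscal h (M2mul V1 G)))).
  rewrite adj_r by auto. mx; cring. mx; cring. Qed.

Lemma first_part a nu c V Gf : 0 < a -> Fund0 a nu c V -> ccont c -> GSpec a V Gf ->
  forall z, has_cderiv (fun s => M2tr (monodromy V s 0)) z (M2tr (M2mul (V (2 * PI) z 0) (Gf z (2 * PI)))).
Proof. intros ha hV hc HG z. destruct (HG z) as [HG0 HGd].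
  destruct (first_order a nu c V z (Gf z) ha hV hc HG0 HGd) as [K [HK0 HK]].
  apply cderiv_crit with (K := mn (V (2 * PI) z 0) * K) (d0 := 1); [lra| apply Rmult_le_pos; auto; apply mn_nn |].
  intros h _ Hh. unfold monodromy.
  set (V1 := V (2 * PI) z 0). set (V2 := V (2 * PI) (Cadd z h) 0). set (G := Gf z (2 * PI)).
  assert (Hdet : det V1 = Defs.C1) by (apply (det_one a nu c V); [exact hV | pose proof PI2; lra]).
  assert (E : Csub (Csub (M2tr V2) (M2tr V1)) (Cmul h (M2tr (M2mul V1 G)))
            = M2tr (M2mul V1 (Msub (Msub (M2mul (adj V1) V2) M2id) (Mscal h G)))).
  { clearbody V1 V2 G. apply tr_alg; auto. }
  rewrite E. eapply Rle_trans; [apply cn_tr|]. eapply Rle_trans; [apply mn_mul|].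
  rewrite Rmult_assoc. apply Rmult_le_compat_l; [apply mn_nn|]. apply HK; auto. apply PI2'. Qed.


Lemma trW a V sg t : M2tr (Wm a V sg t) = Defs.C0.
Proof. unfold Wm, Jm. mx. cring. Qed.

Lemma trG a V Gf sg t : GSpec a V Gf -> 0 <= t <= 2 * PI -> M2tr (Gf sg t) = Defs.C0.
Proof. intros HG Ht. destruct (HG sg) as [HG0 HGd].
  assert (H : cn (Csub (M2tr (Gf sg t)) (M2tr (Gf sg 0))) <= 2 * 0 * t).
  { apply (mvtC (fun u => M2tr (Gf sg u)) (fun u => M2tr (Wm a V sg u)) 0 t). lra.
    intros; apply hd_tr; apply HGd; lra.
    intros. rewrite trW. unfold cn; simpl; rewrite Rabs_R0; lra. }
  cbv beta in H. rewrite HG0 in H. replace (2 * 0 * t) with 0 in H by ring. apply cn0 in H.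
  replace (M2tr M0) with Defs.C0 in H by (mx; cring).
  apply Cext; assert (H1 := f_equal fst H); assert (H2 := f_equal snd H); cxa; simpl in *; lra. Qed.

Lemma adj_sub A B : adj (Msub A B) = Msub (adj A) (adj B).
Proof. mx; mring. Qed.

Lemma Gcont a nu c V Gf sg : 0 < a -> Fund0 a nu c V -> ccont c -> GSpec a V Gf ->
  exists K3, 0 <= K3 /\ forall h, cn h <= 1 -> mn (Msub (Gf (Cadd sg h) (2 * PI)) (Gf sg (2 * PI))) <= K3 * cn h.
Proof. intros ha hV hc HG.
  destruct (Vcont a nu c V sg ha hV hc) as [B [C [HB0 [HC0 HBC]]]].
  assert (HBs : forall t, 0 <= t <= 2 * PI -> mn (V t sg 0) <= B).
  { intros t Ht. rewrite <- (Cadd0 sg). apply HBC; auto. unfold cn; simpl; rewrite Rabs_R0; lra. }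
  assert (Hia : 0 < / a) by (apply Rinv_0_lt_compat; lra).
  pose proof PI2 as HP.
  exists (8 * (2 * (C * (2 * / a) * B)) * (2 * PI)). split.
  { apply Rmult_le_pos; [|lra]. apply Rmult_le_pos; [lra|]. apply Rmult_le_pos; [lra|].
    apply Rmult_le_pos; [|lra]. apply Rmult_le_pos; lra. }
  intros h Hh.
  destruct (HG sg) as [G0 Gd]. destruct (HG (Cadd sg h)) as [G0' Gd'].
  assert (HE := mvtM (fun u => Msub (Gf (Cadd sg h) u) (Gf sg u))
     (fun u => Madd (M2mul (adj (Msub (V u (Cadd sg h) 0) (V u sg 0))) (M2mul (Jm a) (V u (Cadd sg h) 0)))
                    (M2mul (adj (V u sg 0)) (M2mul (Jm a) (Msub (V u (Cadd sg h) 0) (V u sg 0)))))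
     (2 * (C * cn h * (2 * / a) * B)) (2 * PI) ltac:(lra)).
  cbv beta in HE. rewrite G0, G0' in HE. replace (Msub (Msub (Gf (Cadd sg h) (2 * PI)) (Gf sg (2 * PI))) (Msub M0 M0))
     with (Msub (Gf (Cadd sg h) (2 * PI)) (Gf sg (2 * PI))) in HE by (mx; mring).
  eapply Rle_trans; [apply HE|].
  - intros u Hu. eapply hdM_congr. apply hdM_sub; [apply Gd' | apply Gd]; auto.
    unfold Wm. rewrite adj_sub. mx; mring.
  - intros u Hu. eapply Rle_trans; [apply mn_add|].
    assert (H1 := HBC h u Hh Hu). destruct H1 as [H1 H2]. pose proof (HBs u Hu).
    pose proof (mn_mul3 (adj (Msub (V u (Cadd sg h) 0) (V u sg 0))) (Jm a) (V u (Cadd sg h) 0)).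
    pose proof (mn_mul3 (adj (V u sg 0)) (Jm a) (Msub (V u (Cadd sg h) 0) (V u sg 0))).
    rewrite mn_adj, mn_J in * by auto.
    pose proof (mn_nn (V u sg 0)); pose proof (mn_nn (V u (Cadd sg h) 0)); pose proof (mn_nn (Msub (V u (Cadd sg h) 0) (V u sg 0))).
    assert (mn (Msub (V u (Cadd sg h) 0) (V u sg 0)) * (2 * / a * mn (V u (Cadd sg h) 0)) <= C * cn h * (2 * / a * B)).
    { apply Rmult_le_compat; [lra| apply Rmult_le_pos; lra| lra| apply Rmult_le_compat_l; lra]. }
    assert (mn (V u sg 0) * (2 * / a * mn (Msub (V u (Cadd sg h) 0) (V u sg 0))) <= B * (2 * / a * (C * cn h))).
    { apply Rmult_le_compat; [lra| apply Rmult_le_pos; lra| lra| apply Rmult_le_compat_l; lra]. }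
    lra.
  - pose proof (cn_nn h). lra.
Qed.


Lemma alg2 V' G' G h : Csub (Csub (M2tr (M2mul V' G')) (M2tr (M2mul M2id G))) (Cmul h (M2tr (M2mul G G)))
  = Cadd (Csub (M2tr G') (M2tr G)) (Cadd (Cmul h (M2tr (M2mul G (Msub G' G)))) (M2tr (M2mul (Msub (Msub V' M2id) (Mscal h G)) G'))).
Proof. mx; cring. Qed.

Lemma second_part a nu c V Gf sg : 0 < a -> Fund0 a nu c V -> ccont c -> GSpec a V Gf ->
  V (2 * PI) sg 0 = M2id ->
  has_cderiv (fun z => M2tr (M2mul (V (2 * PI) z 0) (Gf z (2 * PI)))) sg (M2tr (M2mul (Gf sg (2 * PI)) (Gf sg (2 * PI)))).
Proof. intros ha hV hc HG hB.
  destruct (HG sg) as [HG0 HGd].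
  destruct (first_order a nu c V sg (Gf sg) ha hV hc HG0 HGd) as [K1 [HK10 HK1]].
  destruct (Gcont a nu c V Gf sg ha hV hc HG) as [K3 [HK30 HK3]].
  set (G := Gf sg (2 * PI)).
  pose proof (mn_nn G) as HG'.
  apply cderiv_crit with (K := mn G * K3 + K1 * (mn G + K3)) (d0 := 1); [lra| |].
  { apply Rplus_le_le_0_compat; apply Rmult_le_pos; lra. }
  intros h _ Hh. cbv beta. rewrite hB. fold G.
  set (V' := V (2 * PI) (Cadd sg h) 0). set (G' := Gf (Cadd sg h) (2 * PI)).
  assert (HR := HK1 h (2 * PI) Hh PI2'). rewrite hB in HR. fold G V' in HR.
  replace (M2mul (adj M2id) V') with V' in HR by (clearbody V'; mx; mring).
  assert (HS := HK3 h Hh). fold G G' in HS.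
  assert (T1 : M2tr G' = Defs.C0) by (apply (trG a V Gf); auto; apply PI2').
  assert (T2 : M2tr G = Defs.C0) by (apply (trG a V Gf); auto; apply PI2').
  rewrite alg2, T1, T2.
  replace (Csub Defs.C0 Defs.C0) with Defs.C0 by cring.
  eapply Rle_trans; [apply cn_add|]. replace (cn Defs.C0) with 0 by (unfold cn; simpl; rewrite Rabs_R0; ring).
  eapply Rle_trans; [apply Rplus_le_compat_l; apply cn_add|].
  pose proof (cn_mul h (M2tr (M2mul G (Msub G' G)))).
  pose proof (cn_tr (M2mul G (Msub G' G))). pose proof (mn_mul G (Msub G' G)).
  pose proof (cn_tr (M2mul (Msub (Msub V' M2id) (Mscal h G)) G')). pose proof (mn_mul (Msub (Msub V' M2id) (Mscal h G)) G').
  pose proof (cn_nn h). pose proof (mn_nn (Msub G' G)). pose proof (mn_nn (Msub (Msub V' M2id) (Mscal h G))).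
  assert (HG2 : mn G' <= mn G + K3).
  { replace G' with (Madd G (Msub G' G)) by (clearbody G G'; mx; mring). eapply Rle_trans; [apply mn_add|].
    assert (K3 * cn h <= K3) by nra. lra. }
  pose proof (mn_nn G').
  assert (A1 : cn (Cmul h (M2tr (M2mul G (Msub G' G)))) <= mn G * K3 * cn h ^ 2).
  { eapply Rle_trans; [eassumption|]. 
    assert (cn (M2tr (M2mul G (Msub G' G))) <= mn G * (K3 * cn h)).
    { eapply Rle_trans; [eassumption|]. eapply Rle_trans; [eassumption|]. apply Rmult_le_compat_l; lra. }
    assert (cn h * cn (M2tr (M2mul G (Msub G' G))) <= cn h * (mn G * (K3 * cn h))) by (apply Rmult_le_compat_l; lra).
    nra. }
  assert (A2 : cn (M2tr (M2mul (Msub (Msub V' M2id) (Mscal h G)) G')) <= K1 * (mn G + K3) * cn h ^ 2).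
  { eapply Rle_trans; [eassumption|]. eapply Rle_trans; [eassumption|].
    replace (K1 * (mn G + K3) * cn h ^ 2) with ((K1 * cn h ^ 2) * (mn G + K3)) by ring.
    apply Rmult_le_compat; lra. }
  nra. Qed.


Definition swapc (A : M2) : M2 := mkM2 (Cconj (m22 A)) (Cconj (m21 A)) (Cconj (m12 A)) (Cconj (m11 A)).

Lemma Vsym a nu c V tau t : 0 < a -> Fund0 a nu c V -> 0 <= t ->
  m22 (V t (RtoC tau) 0) = Cconj (m11 (V t (RtoC tau) 0)) /\ m21 (V t (RtoC tau) 0) = Cconj (m12 (V t (RtoC tau) 0)).
Proof. intros ha hV Ht. destruct (hV (RtoC tau)) as [H0 Hd].
  set (sg := RtoC tau) in *.
  assert (Hs : forall u, has_tderiv_M2 (fun s => swapc (V s sg 0)) u (M2mul (Mx a nu c sg u) (swapc (V u sg 0)))).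
  { intro u. destruct (Hd u) as (D1&D2&D3&D4). apply hdM_congr with (L := swapc (M2mul (Mx a nu c sg u) (V u sg 0))).
    - msplit; unfold swapc; cbn [m11 m12 m21 m22]; apply hd_conj; assumption.
    - unfold sg, swapc, Mx, mx11. mx. apply Mext; cbn [m11 m12 m21 m22]; apply Cext; cx; cbn [fst snd]; field; apply Rgt_not_eq; exact ha. }
  assert (HD : mn (Msub (M2mul (adj (V t sg 0)) (swapc (V t sg 0))) (M2mul (adj (V 0 sg 0)) (swapc (V 0 sg 0)))) <= 8 * 0 * t).
  { apply (mvtM (fun u => M2mul (adj (V u sg 0)) (swapc (V u sg 0)))
                (fun u => M2mul (adj (V u sg 0)) (M2mul (Msub (Mx a nu c sg u) (Mx a nu c sg u)) (swapc (V u sg 0))))).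
    lra. intros; apply (d_adjmul (fun u => V u sg 0) (fun u => swapc (V u sg 0))); auto.
    intros. replace (Msub (Mx a nu c sg s) (Mx a nu c sg s)) with M0 by (mx; mring).
    replace (M2mul (adj (V s sg 0)) (M2mul M0 (swapc (V s sg 0)))) with M0 by (mx; mring).
    unfold mn, cn, M0; cx; simpl; rewrite Rabs_R0; lra. }
  replace (8 * 0 * t) with 0 in HD by ring. apply mn0, Msub0 in HD.
  rewrite H0 in HD. replace (M2mul (adj M2id) (swapc M2id)) with M2id in HD by (unfold swapc; mx; mring).
  assert (Hdet : det (V t sg 0) = Defs.C1) by (apply (det_one a nu c V); auto).
  assert (E : swapc (V t sg 0) = V t sg 0).
  { transitivity (M2mul (M2mul (V t sg 0) (adj (V t sg 0))) (swapc (V t sg 0))).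
    rewrite adj_r by auto. mx; mring. transitivity (M2mul (V t sg 0) (M2mul (adj (V t sg 0)) (swapc (V t sg 0)))).
    mx; mring. rewrite HD. mx; mring. }
  split.
  - assert (H := f_equal m11 E). simpl in H. rewrite <- H. apply Cext; cx; simpl; ring.
  - assert (H := f_equal m21 E). simpl in H. auto.
Qed.

Lemma Wstruct a nu c V tau t : 0 < a -> Fund0 a nu c V -> 0 <= t ->
  let p := m11 (V t (RtoC tau) 0) in let q := m12 (V t (RtoC tau) 0) in
  let W := Wm a V (RtoC tau) t in
  fst p ^ 2 + snd p ^ 2 - (fst q ^ 2 + snd q ^ 2) = 1 /\
  fst (m11 W) = 0 /\ snd (m11 W) = (fst p ^ 2 + snd p ^ 2 + (fst q ^ 2 + snd q ^ 2)) / a /\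
  Csub (m21 W) (Cconj (m12 W)) = Defs.C0 /\
  fst (m12 W) ^ 2 + snd (m12 W) ^ 2 = 4 * ((fst p ^ 2 + snd p ^ 2) * (fst q ^ 2 + snd q ^ 2)) / a ^ 2.
Proof. intros ha hV Ht p q W.
  destruct (Vsym a nu c V tau t ha hV Ht) as [S1 S2].
  assert (Hdet := det_one a nu c V (RtoC tau) t hV Ht).
  assert (HX : V t (RtoC tau) 0 = mkM2 p q (Cconj q) (Cconj p)).
  { apply Mext; simpl; auto. }
  unfold W, Wm. rewrite HX. rewrite HX in Hdet. clearbody p q. clear HX S1 S2.
  assert (Hd := f_equal fst Hdet). unfold det, Jm in *. cbn [m11 m12 m21 m22] in *. cxa. cbn [fst snd] in *.
  destruct p as [p1 p2]; destruct q as [q1 q2]. cbn [fst snd] in *.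
  split; [nra|]. unfold M2mul, adj; cbn [m11 m12 m21 m22]; cx; cbn [fst snd]. split; [field; apply Rgt_not_eq; exact ha|]. split; [field; apply Rgt_not_eq; exact ha|].
  split; [apply Cext; cbn [fst snd]; field; apply Rgt_not_eq; exact ha|].
  field; apply Rgt_not_eq; exact ha. Qed.

Lemma d2_nz a nu c V Gf tau : 0 < a -> Fund0 a nu c V -> GSpec a V Gf ->
  M2tr (M2mul (Gf (RtoC tau) (2 * PI)) (Gf (RtoC tau) (2 * PI))) <> Defs.C0.
Proof. intros ha hV HG. destruct (HG (RtoC tau)) as [G0 Gd].
  pose proof PI2 as HP.
  assert (Gd' : forall u, 0 <= u <= 2 * PI -> has_tderiv_M2 (Gf (RtoC tau)) u (Wm a V (RtoC tau) u)) by exact Gd.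
  assert (F1 : fst (m11 (Gf (RtoC tau) (2 * PI))) = 0).
  { assert (H := mvt_bound (fun u => fst (m11 (Gf (RtoC tau) u))) (fun u => fst (m11 (Wm a V (RtoC tau) u))) 0 (2 * PI) ltac:(lra)).
    cbv beta in H. rewrite G0 in H. cbn [M0 m11 m12 fst snd Defs.C0] in H.
    assert (Rabs (fst (m11 (Gf (RtoC tau) (2 * PI))) - 0) <= 0 * (2 * PI)).
    { apply H. intros s Hs. destruct (Gd' s Hs) as [[D _] _]. exact D.
      intros s Hs. destruct (Wstruct a nu c V tau s ha hV ltac:(lra)) as (_&E&_). cbv beta. rewrite E, Rabs_R0. lra. }
    pose proof (Rabs_pos (fst (m11 (Gf (RtoC tau) (2 * PI))) - 0)).
    rewrite Rmult_0_l in H0. apply Rabs_eq_0 in H0. lra. }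
  assert (F2 : m21 (Gf (RtoC tau) (2 * PI)) = Cconj (m12 (Gf (RtoC tau) (2 * PI)))).
  { assert (H : cn (Csub (Csub (m21 (Gf (RtoC tau) (2 * PI))) (Cconj (m12 (Gf (RtoC tau) (2 * PI)))))
                        (Csub (m21 (Gf (RtoC tau) 0)) (Cconj (m12 (Gf (RtoC tau) 0))))) <= 2 * 0 * (2 * PI)).
    { apply (mvtC (fun u => Csub (m21 (Gf (RtoC tau) u)) (Cconj (m12 (Gf (RtoC tau) u))))
                  (fun u => Csub (m21 (Wm a V (RtoC tau) u)) (Cconj (m12 (Wm a V (RtoC tau) u))))). lra.
      intros s Hs. destruct (Gd' s Hs) as (_&D2&D3&_). apply hd_sub; auto. apply hd_conj; auto.
      intros s Hs. destruct (Wstruct a nu c V tau s ha hV ltac:(lra)) as (_&_&_&E&_). rewrite E.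
      unfold cn; simpl; rewrite Rabs_R0; lra. }
    rewrite G0 in H. replace (2 * 0 * (2 * PI)) with 0 in H by ring. apply cn0 in H.
    apply Cext; assert (H1 := f_equal fst H); assert (H2 := f_equal snd H); cxa; simpl in *; lra. }
  assert (F3 := trG a V Gf (RtoC tau) (2 * PI) HG PI2').
  assert (Hpsi : forall u, 0 <= u <= 2 * PI -> derivable_pt_lim (fun u => snd (m11 (Gf (RtoC tau) u))) u (snd (m11 (Wm a V (RtoC tau) u)))).
  { intros u Hu. destruct (Gd' u Hu) as [[_ D] _]. exact D. }
  assert (Hps : forall u, 0 <= u <= 2 * PI -> 0 < snd (m11 (Wm a V (RtoC tau) u))).
  { intros u Hu. destruct (Wstruct a nu c V tau u ha hV ltac:(lra)) as (E0&_&E&_). rewrite E.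
    apply Rdiv_lt_0_compat; auto. nra. }
  assert (F4 : 0 < snd (m11 (Gf (RtoC tau) (2 * PI)))).
  { assert (H := strict_incr _ _ (2 * PI) HP Hpsi Hps). cbv beta in H. rewrite G0 in H. exact H. }
  set (y1 := fst (m12 (Gf (RtoC tau) (2 * PI)))). set (y2 := snd (m12 (Gf (RtoC tau) (2 * PI)))).
  set (psi := snd (m11 (Gf (RtoC tau) (2 * PI)))).
  assert (Key : y1 ^ 2 + y2 ^ 2 < psi ^ 2).
  { set (rho := sqrt (y1 ^ 2 + y2 ^ 2)).
    assert (Hr : rho * rho = y1 ^ 2 + y2 ^ 2) by (apply sqrt_sqrt; nra).
    assert (Hr0 : 0 <= rho) by apply sqrt_pos.
    destruct (Req_dec rho 0) as [Hz|Hnz].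
    - rewrite Hz in Hr. assert (psi ^ 2 > 0) by (apply pow_lt; exact F4). lra.
    - assert (Hth := strict_incr (fun u => rho * snd (m11 (Gf (RtoC tau) u)) - (y1 * fst (m12 (Gf (RtoC tau) u)) + y2 * snd (m12 (Gf (RtoC tau) u))))
         (fun u => rho * snd (m11 (Wm a V (RtoC tau) u)) - (y1 * fst (m12 (Wm a V (RtoC tau) u)) + y2 * snd (m12 (Wm a V (RtoC tau) u))))
         (2 * PI) HP).
      cbv beta in Hth. rewrite G0 in Hth. cbn [M0 m11 m12 fst snd Defs.C0] in Hth.
      assert (rho * 0 - (y1 * 0 + y2 * 0) < rho * psi - (y1 * y1 + y2 * y2)).
      { apply Hth.
        - intros u Hu. destruct (Gd' u Hu) as [[_ D1] [[D2 D3] _]].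
          eapply (dpl_ext (minus_fct (mult_real_fct rho (fun u => snd (m11 (Gf (RtoC tau) u))))
                   (plus_fct (mult_real_fct y1 (fun u => fst (m12 (Gf (RtoC tau) u)))) (mult_real_fct y2 (fun u => snd (m12 (Gf (RtoC tau) u))))))).
          intro; reflexivity.
          apply derivable_pt_lim_minus. apply derivable_pt_lim_scal; exact D1.
          apply derivable_pt_lim_plus; apply derivable_pt_lim_scal; [exact D2 | exact D3]. reflexivity.
        - intros u Hu. destruct (Wstruct a nu c V tau u ha hV ltac:(lra)) as (E0&_&E1&_&E2).
          rewrite E1. set (w1 := fst (m12 (Wm a V (RtoC tau) u))) in *. set (w2 := snd (m12 (Wm a V (RtoC tau) u))) in *.
          set (P := fst (m11 (V u (RtoC tau) 0)) ^ 2 + snd (m11 (V u (RtoC tau) 0)) ^ 2) in *.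
          set (Q := fst (m12 (V u (RtoC tau) 0)) ^ 2 + snd (m12 (V u (RtoC tau) 0)) ^ 2) in *.
          set (sv := (P + Q) / a).
          assert (HPQ : P = Q + 1) by lra.
          assert (HQ : 0 <= Q) by (unfold Q; nra).
          assert (Hsv : 0 < sv) by (unfold sv; apply Rdiv_lt_0_compat; lra).
          assert (Hw : sv ^ 2 - (w1 ^ 2 + w2 ^ 2) = 1 / a ^ 2).
          { rewrite E2. unfold sv. rewrite HPQ. field. apply Rgt_not_eq; exact ha. }
          assert (Hia : 0 < 1 / a ^ 2) by (apply Rdiv_lt_0_compat; nra).
          assert (CS : (y1 * w1 + y2 * w2) ^ 2 <= (y1 ^ 2 + y2 ^ 2) * (w1 ^ 2 + w2 ^ 2)).
          { assert ((y1 ^ 2 + y2 ^ 2) * (w1 ^ 2 + w2 ^ 2) - (y1 * w1 + y2 * w2) ^ 2 = (y1 * w2 - y2 * w1) ^ 2) by ring. pose proof (pow2_ge_0 (y1 * w2 - y2 * w1)). lra. }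
          assert (Hrp : 0 < rho) by lra.
          assert (0 < rho * sv) by nra.
          destruct (Rle_dec (y1 * w1 + y2 * w2) 0) as [Hn|Hn]; [lra|].
          assert ((y1 * w1 + y2 * w2) ^ 2 < (rho * sv) ^ 2).
          { replace ((rho * sv) ^ 2) with ((y1 ^ 2 + y2 ^ 2) * sv ^ 2) by (rewrite <- Hr; ring).
            assert (0 < y1 ^ 2 + y2 ^ 2) by nra. nra. }
          nra. }
      assert (rho * rho < rho * psi) by nra.
      assert (rho < psi) by nra. nra. }
  intro Habs. assert (H := f_equal fst Habs).
  replace (Gf (RtoC tau) (2 * PI)) with (mkM2 (0, psi) (y1, y2) (y1, - y2) (0, - psi)) in H.
  - unfold M2tr, M2mul in H. cbn [m11 m12 m21 m22] in H. cxa. cbn [fst snd] in H. nra.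
  - apply Mext; cbn [m11 m12 m21 m22].
    + apply Cext; simpl; auto.
    + apply Cext; simpl; auto.
    + rewrite F2. apply Cext; simpl; auto.
    + assert (H1 := f_equal fst F3). assert (H2 := f_equal snd F3). unfold M2tr in H1, H2. cxa. simpl in H1, H2.
      apply Cext; simpl; fold psi in H2; lra.
Qed.


Lemma ccont_of k c : (2 <= k)%nat -> CkS1 k c -> ccont c.
Proof. intros hk [_ [[D1 [E1 [H1 _]]] [D2 [E2 [H2 _]]]]] x. split.
  - assert (H := H1 0%nat ltac:(lia) x). rewrite E1 in H.
    apply derivable_continuous_pt. eexists; exact H.
  - assert (H := H2 0%nat ltac:(lia) x). rewrite E2 in H.
    apply derivable_continuous_pt. eexists; exact H.
Qed.

Theorem proposition2p9
  (a b nu : R) (k : nat) (c : R -> Cx) (V : R -> Cx -> R -> M2) (tau : R)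
  (ha : 0 < a) (hb : b <> 0) (hnu0 : 0 <= nu) (hnu1 : nu < 1)
  (hk : (2 <= k)%nat) (hc : CkS1 k c)
  (hV : is_fundamental a b nu c V)
  (hB : monodromy V (RtoC tau) 0 = M2id) :
  exists dtr : Cx -> Cx,
    (forall z : Cx, has_cderiv (fun s => M2tr (monodromy V s 0)) z (dtr z)) /\
    dtr (RtoC tau) = C0 /\
    exists d2 : Cx, has_cderiv dtr (RtoC tau) d2 /\ d2 <> C0.
Proof.
  assert (hV0 := fund0_of a b nu c V ha hV).
  assert (hcc := ccont_of k c hk hc).
  assert (Hex : forall sg, exists G : R -> M2, G 0 = M0 /\ forall t, 0 <= t <= 2 * PI -> has_tderiv_M2 G t (Wm a V sg t))
    by (intro sg; apply (Gex a nu c V sg hV0)).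
  set (Gf := fun sg => proj1_sig (constructive_indefinite_description _ (Hex sg))).
  assert (HG : GSpec a V Gf) by (intro sg; unfold Gf; exact (proj2_sig (constructive_indefinite_description _ (Hex sg)))).
  clearbody Gf.
  unfold monodromy in hB.
  exists (fun z => M2tr (M2mul (V (2 * PI) z 0) (Gf z (2 * PI)))). split; [|split].
  - apply (first_part a nu c V Gf); auto.
  - cbv beta. rewrite hB. replace (M2mul M2id (Gf (RtoC tau) (2 * PI))) with (Gf (RtoC tau) (2 * PI)) by (mx; mring).
    apply (trG a V Gf); auto. apply PI2'.
  - exists (M2tr (M2mul (Gf (RtoC tau) (2 * PI)) (Gf (RtoC tau) (2 * PI)))). split.
    + apply (second_part a nu c V Gf); auto.
    + apply (d2_nz a nu c V Gf tau); auto.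
Qed.
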